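(* Let $q>5$ be a prime power which is either odd or a power of $4$. Then every partition of $\mathbb F_q^*$ which is preserved by $G(q)$ consists of all the cosets of some subgroup of $\mathbb F_q^*$.
   Context: $\mathbb F_q$ is the field with $q$ elements, $\mathbb F_q^*$ its multiplicative group. $G(q)$ denotes the group of permutations of $\mathbb F_q^*$ generated by all permutations of $\mathbb F_q^*$ which can be represented as $c\mapsto ac^m+bc^n$ with $a,b\in\mathbb F_q^*$ and integers $0<m<n<q$. A partition $\mathcal P$ of $\mathbb F_q^*$ is preserved by $G(q)$ if for every part $S$ of $\mathcal P$ and every $g\in G(q)$, the set $g(S)$ is also a part of $\mathcal P$. *)

(* Defs.v *)
From HB Require Import structures.
From mathcomp Require Import all_boot all_order all_algebra all_fingroup all_field.
Set Implicit Arguments. Unset Strict Implicit. Unset Printing Implicit Defensive.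
Import GRing.Theory.
Local Open Scope ring_scope.

(* The multiplicative group F_q^* is modelled by {unit F} for a finite field F,
   with q = #|F|. *)

Definition binom_perm (F : finFieldType) (s : {perm {unit F}}) : bool :=
  [exists a : F, exists b : F, exists m : 'I_#|F|, exists n : 'I_#|F|,
    [&& a != 0, b != 0, (0 < m)%N, (m < n)%N &
     [forall c : {unit F}, val (s c) == a * (val c) ^+ m + b * (val c) ^+ n]]].

Definition Gq (F : finFieldType) : {group {perm {unit F}}} :=
  <<[set s : {perm {unit F}} | binom_perm s]>>%G.

Definition preserved_by (F : finFieldType) (G : {set {perm {unit F}}})
    (P : {set {set {unit F}}}) : Prop :=
  forall S, S \in P -> forall g, g \in G -> [set g x | x in S] \in P.

(* Main.v *)
Require Import Defs.
From HB Require Import structures.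
From mathcomp Require Import all_boot all_order all_algebra all_fingroup all_field.
From mathcomp Require Import all_solvable ring zify.
Set Implicit Arguments. Unset Strict Implicit. Unset Printing Implicit Defensive.
Import GRing.Theory FinRing.Theory.
Section S1.
Local Open Scope ring_scope.

Lemma unit_mulC (F : finFieldType) (x y : {unit F}) : (x * y = y * x)%g.
Proof. by apply: val_inj; rewrite !val_unitM mulrC. Qed.

Definition tr (F : finFieldType) (a : {unit F}) : {perm {unit F}} :=
  perm (@mulgI _ a).

Lemma trE (F : finFieldType) (a x : {unit F}) : tr a x = (a * x)%g.
Proof. by rewrite permE. Qed.

Lemma exists_binom (F : finFieldType) (al be : F) (m n : nat) :
  (0 < m)%N -> (m < n)%N -> (n < #|F|)%N -> al != 0 -> be != 0 ->
  (forall c : F, c != 0 -> al * c ^+ m + be * c ^+ n != 0) ->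
  (forall c1 c2 : F, c1 != 0 -> c2 != 0 ->
      al * c1 ^+ m + be * c1 ^+ n = al * c2 ^+ m + be * c2 ^+ n -> c1 = c2) ->
  exists s : {perm {unit F}}, binom_perm s.
Proof.
move=> m0 mn nq al0 be0 hnz hinj.
pose h (c : F) := al * c ^+ m + be * c ^+ n.
pose fu (c : {unit F}) : {unit F} := insubd c (h (val c)).
have fuE c : val (fu c) = h (val c).
  by rewrite /fu insubdK // unitfE hnz // -unitfE (valP c).
have nzu (c : {unit F}) : val c != 0 by rewrite -unitfE (valP c).
have fu_inj : injective fu.
  by move=> c1 c2 /(congr1 val); rewrite !fuE => /(hinj _ _ (nzu c1) (nzu c2)) /val_inj.
exists (perm fu_inj); apply/existsP; exists al; apply/existsP; exists be.
apply/existsP; exists (Ordinal (ltn_trans mn nq)); apply/existsP; exists (Ordinal nq).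
rewrite al0 be0 m0 mn /=; apply/forallP => c; by rewrite permE fuE.
Qed.

Lemma tr_in_Gq (F : finFieldType) : (exists s : {perm {unit F}}, binom_perm s) ->
  forall a : {unit F}, tr a \in Gq F.
Proof.
case=> s bs a.
have sG : s \in Gq F by apply: mem_gen; rewrite inE.
pose g := (s * tr a)%g.
have gG : g \in Gq F.
  apply: mem_gen; rewrite inE.
  case/existsP: bs => al /existsP [be /existsP [m /existsP [n /and5P [al0 be0 m0 mn /forallP H]]]].
  apply/existsP; exists (val a * al); apply/existsP; exists (val a * be).
  apply/existsP; exists m; apply/existsP; exists n.
  have a0 : val a != 0 by rewrite -unitfE (valP a).
  rewrite !mulf_neq0 // m0 mn /=; apply/forallP => c.
  rewrite permM trE val_unitM (eqP (H c)) mulrDr !mulrA.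
by [].
have E : tr a = (s^-1 * g)%g by apply/permP => x; rewrite /g !permM permKV.
rewrite E.
by rewrite groupM ?groupV.
Qed.
End S1.

Section S2.
Local Open Scope group_scope.

Lemma part_cosets (F : finFieldType) (G : {group {perm {unit F}}})
  (P : {set {set {unit F}}}) :
  (forall a, tr a \in G) -> partition P [set: {unit F}] -> preserved_by G P ->
  exists H : {group {unit F}}, P = rcosets H [set: {unit F}].
Proof.
move=> trG /and3P [/eqP covP triv nz0] pres.
have covx x : x \in cover P by rewrite covP inE.
have transl S a : S \in P -> [set (a * y)%g | y in S] \in P.
  move=> SP; have := pres S SP _ (trG a).
  by congr (_ \in P); apply: eq_imset => y; rewrite trE.
pose B := pblock P 1%g.
have BP : B \in P by exact: pblock_mem.
have KB S x : S \in P -> x \in S -> [set (x^-1 * y)%g | y in S] = B.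
  move=> SP xS; apply/esym/def_pblock => //; first exact: transl.
  by apply/imsetP; exists x => //; rewrite mulVg.
have B1 : (1 \in B)%g by rewrite mem_pblock.
have BV b : b \in B -> (b^-1 \in B)%g.
  move=> bB; rewrite -(KB B b BP bB); apply/imsetP; exists 1%g => //.
  by rewrite mulg1.
have BM b1 b2 : b1 \in B -> b2 \in B -> (b1 * b2 \in B)%g.
  move=> b1B b2B; rewrite -(KB B (b1^-1)%g BP (BV _ b1B)) invgK.
  by apply/imsetP; exists b2.
have gB : group_set B by apply/group_setP; split => // x y xB yB; exact: BM.
exists (Group gB).
have SE S x : S \in P -> x \in S -> S = (B :* x)%g.
  move=> SP xS; apply/setP => z; rewrite mem_rcoset -(KB S x SP xS) unit_mulC.
  apply/idP/imsetP => [zS | [y yS /mulgI ->] //]; by exists z.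
apply/setP => S; apply/idP/rcosetsP => [SP | [x _ ->]].
  have [x xS] : exists x, x \in S.
    by apply/set0Pn; apply: contraNneq nz0 => <-.
  by exists x; rewrite ?inE // (SE S x SP xS).
rewrite /= -(SE _ x (pblock_mem (covx x))) ?mem_pblock //; exact: pblock_mem.
Qed.
End S2.

Section S3.
Local Open Scope ring_scope.

Lemma pow_q1 (F : finFieldType) (x : F) : x != 0 -> x ^+ #|F|.-1 = 1.
Proof.
move=> x0; apply: (mulfI x0); rewrite mulr1 -exprS prednK ?expf_card //.
exact: (ltn_trans _ (finNzRing_gt1 F)).
Qed.

Lemma unit_gen (F : finFieldType) : exists g : {unit F}, #[g]%g = #|F|.-1.
Proof.
have /cyclicP [g Hg] := field_unit_group_cyclic [set: {unit F}]%G.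
by exists g; rewrite /order -Hg card_finField_unit.
Qed.

Lemma odd_binom (F : finFieldType) : odd #|F| -> (5 < #|F|)%N ->
  exists s : {perm {unit F}}, binom_perm s.
Proof.
move=> oq q5.
have [t qt] : exists t, #|F| = t.*2.+1.
  by exists #|F|./2; have := odd_double_half #|F|; rewrite oq add1n.
have q1 : #|F|.-1 = (t + t)%N by rewrite qt addnn.
have [g og] := unit_gen F.
pose r := val g.
have r0 : r != 0 by rewrite -unitfE (valP g).
have r4 : r ^+ 4 != 1.
  apply/negP => /eqP h4.
  have : (#[g]%g %| 4)%N.
    by rewrite order_dvdn; apply/eqP/val_inj; rewrite val_unitX h4.
  move/dvdn_leq => /(_ isT); rewrite og; lia.
have two0 : (2%:R : F) != 0.
  apply/negP => /eqP h2.
  have ch : (2 \in [pchar F])%R by rewrite inE h2 eqxx.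
  have := pgroup_pdiv (abelem_pgroup (fin_ring_pchar_abelem ch)).
  rewrite trivg_card1 cardsT => /(_ _) [].
    have h1 : (#|F| != 1)%N by rewrite qt; lia.
    exact: h1.
  move=> _ d2 _; have : (2 %| #|F|)%N := d2.
  by rewrite qt dvdn2 /= odd_double.
pose A := 2%:R * r; pose B := r ^+ 2 + 1.
have A0 : A != 0 by rewrite mulf_neq0.
have rp1 : r + 1 != 0.
  apply: contraNneq r4 => h; have -> : r = -1 by rewrite -(subr0 r) -h; ring.
  by apply/eqP; ring.
have rm1 : r - 1 != 0.
  apply: contraNneq r4 => h; have -> : r = 1 by rewrite -(subr0 r) -h; ring.
  by rewrite expr1n.
have B0 : B != 0.
  apply: contraNneq r4 => h; apply/eqP.
  have -> : r ^+ 4 = (r ^+ 2 + 1) * (r ^+ 2 - 1) + 1 by ring.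
  by rewrite -/B h mul0r add0r.
have sq1 (y : F) : y != 0 -> (y ^+ 2) ^+ t = 1.
  by move=> y0; rewrite -exprM mulnC muln2 -addnn -q1 pow_q1.
have key (c : F) : c != 0 -> (c ^+ t = 1 \/ c ^+ t = -1).
  move=> c0; have : (c ^+ t - 1) * (c ^+ t + 1) = 0.
    have -> : (c ^+ t - 1) * (c ^+ t + 1) = c ^+ (t + t) - 1.
      by rewrite exprD; ring.
    by rewrite -q1 pow_q1 // subrr.
  move/eqP; rewrite mulf_eq0 => /orP [] /eqP h; [left | right].
    by rewrite -(subr0 (c ^+ t)) -h; ring.
  by rewrite -(subr0 (c ^+ t)) -h; ring.
pose w (c : F) := B + A * c ^+ t.
have w0 c : c != 0 -> w c != 0 /\ (w c) ^+ t = 1.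
  move=> c0; rewrite /w; case: (key c c0) => ->.
    have -> : B + A * 1 = (r + 1) ^+ 2 by rewrite /A /B; ring.
    by rewrite sq1 // expf_neq0.
  have -> : B + A * -1 = (r - 1) ^+ 2 by rewrite /A /B; ring.
  by rewrite sq1 // expf_neq0.
have hE c : B * c ^+ 1 + A * c ^+ t.+1 = c * w c by rewrite /w expr1 exprS; ring.
apply: (@exists_binom F B A 1 t.+1) => //; try lia.
- move=> c c0; rewrite hE mulf_neq0 //; by case: (w0 c c0).
- move=> c1 c2 c10 c20; rewrite !hE => E.
  have Et : c1 ^+ t = c2 ^+ t.
    have := congr1 (fun x => x ^+ t) E; rewrite /= !exprMn.
    by case: (w0 c1 c10) => _ ->; case: (w0 c2 c20) => _ ->; rewrite !mulr1.
  have Ew : w c1 = w c2 by rewrite /w Et.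
  by move: E; rewrite Ew; apply: mulIf; case: (w0 c2 c20).
Qed.

Lemma four_binom (F : finFieldType) (k : nat) : #|F| = (4 ^ k)%N -> (5 < #|F|)%N ->
  exists s : {perm {unit F}}, binom_perm s.
Proof.
move=> qk q5.
have ch : (2 \in [pchar F])%R.
  by apply: (@card_finPcharP F 2 (2 * k)); rewrite // qk expnM.
have frob (x y : F) : (x - y) ^+ 2 = x ^+ 2 - y ^+ 2.
  by have := pFrobenius_autB_comm ch (mulrC x y); rewrite !pFrobenius_autE.
have frob4 (x y : F) : (x - y) ^+ 4 = x ^+ 4 - y ^+ 4.
  by rewrite -[4%N]/(2 * 2)%N !exprM !frob.
have [j qj] : exists j, #|F|.-1 = (3 * j)%N.
  rewrite qk; elim: k {qk q5} => [|k [j IH]]; first by exists 0%N.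
  exists (4 * j + 1)%N; rewrite expnS; move: IH; have := expn_gt0 4 k; lia.
have [g og] := unit_gen F.
pose w := val g.
have w0 : w != 0 by rewrite -unitfE (valP g).
have ncube (d : F) : d != 0 -> d ^+ 3 != w.
  move=> d0; apply/negP => /eqP d3.
  pose u := finField_unit d0.
  have gu : g = (u ^+ 3)%g by apply: val_inj; rewrite val_unitX /= d3.
  have : (#[g]%g %| j)%N.
    rewrite order_dvdn gu -expgM; apply/eqP/val_inj.
    by rewrite val_unitX /= -qj pow_q1.
  rewrite og qj => /dvdn_leq; have : (0 < #|F|.-1)%N by rewrite qk; have := expn_gt0 4 k; case: k qk q5 => //= *; lia.
  rewrite qj; lia.
have q16 : (4 < #|F|)%N.
  move: q5; rewrite qk; case: k {qk} => [|[|k]] //= _.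
  by rewrite !expnS; have := expn_gt0 4 k; lia.
have hE c : - w * c ^+ 1 + 1 * c ^+ 4 = c * (c ^+ 3 - w).
  by rewrite expr1 [c ^+ 4]exprS; ring.
apply: (@exists_binom F (- w) 1 1 4) => //; rewrite ?oppr_eq0 ?oner_neq0 //.
- by move=> c c0; rewrite hE mulf_neq0 // subr_eq0 ncube.
- move=> c1 c2 c10 c20 E.
  have E2 : (c1 - c2) * ((c1 - c2) ^+ 3 - w) = 0.
    have -> : (c1 - c2) * ((c1 - c2) ^+ 3 - w) = (c1 - c2) ^+ 4 - w * (c1 - c2).
      by rewrite [_ ^+ 4]exprS; ring.
    rewrite frob4; apply/eqP; rewrite subr_eq0; apply/eqP.
    have : (- w * c1 ^+ 1 + 1 * c1 ^+ 4) - (- w * c2 ^+ 1 + 1 * c2 ^+ 4) = 0 by rewrite E subrr.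
    move=> h; rewrite -[LHS]subr0 -h; ring.
  move/eqP: E2; rewrite mulf_eq0 => /orP [|]; first by rewrite subr_eq0 => /eqP.
  case: (eqVneq (c1 - c2) 0) => [/eqP|d0]; first by rewrite subr_eq0 => /eqP.
  by rewrite subr_eq0 (negPf (ncube _ d0)).
Qed.
End S3.

Theorem corollary4p5 (F : finFieldType) :
  (5 < #|F|)%N ->
  (odd #|F| \/ exists k : nat, #|F| = 4 ^ k)%N ->
  forall P : {set {set {unit F}}},
    partition P [set: {unit F}] ->
    preserved_by (Gq F) P ->
    exists H : {group {unit F}}, P = rcosets H [set: {unit F}].
Proof.
move=> q5 hq P hP hpres.
have ex : exists s : {perm {unit F}}, binom_perm s.
  case: hq => [oq | [k qk]]; [exact: odd_binom | exact: (four_binom qk)].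
exact: (part_cosets (tr_in_Gq ex) hP hpres).
Qed.
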